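(* If $\beta=\alpha$, then for $k,\ell\ge 1$: \begin{eqnarray*} |u(3k-1)-u(3k-2)| & = & |u(3k-2)-u(3k-3)|,\\ |v(3k)-v(3k-1)| & = & |v(3k-1)-v(3k-2)|,\\ |w(3k+1)-w(3k)| & = & |w(3k)-w(3k-1)|,\\ |u((3\ell-1)\omega)-u((3\ell-2)\omega)| & = & |u((3\ell-2)\omega)-u((3\ell-3)\omega)|,\\ |v(3\ell\omega)-v((3\ell-1)\omega)| & = & |v((3\ell-1)\omega)-v((3\ell-2)\omega)|,\\ |w((3\ell+1)\omega)-w(3\ell\omega)| & = & |w(3\ell\omega)-w((3\ell-1)\omega)|. \end{eqnarray*}
   Context: Here $\omega=e^{2\pi i/3}$, and $u,v,w$ are the fields on the sector $\{k+\ell\omega: k,\ell\ge0\}$ of the regular triangular lattice obtained from the $fgh$--system with the constraints \[ \alpha u=k\frac{f_0g_0f_3}{f_0g_0+g_0f_3+f_3g_3}+\ell\frac{f_2g_2f_5}{f_2g_2+g_2f_5+f_5g_5}+m\frac{f_4g_4f_1}{f_4g_4+g_4f_1+f_1g_1},\quad \beta v=k\frac{g_0f_3g_3}{f_0g_0+g_0f_3+f_3g_3}+\ell\frac{g_2f_5g_5}{f_2g_2+g_2f_5+f_5g_5}+m\frac{g_4f_1g_1}{f_4g_4+g_4f_1+f_1g_1} \] at every vertex $\mathfrak{z}=k+\ell\omega+m\omega^2$ (with $f_j,g_j$ the increments of $u,v$ along $(\mathfrak{z},\mathfrak{z}+1)$, $(\mathfrak{z}-\omega^2,\mathfrak{z})$,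 $(\mathfrak{z},\mathfrak{z}+\omega)$, $(\mathfrak{z}-1,\mathfrak{z})$, $(\mathfrak{z},\mathfrak{z}+\omega^2)$, $(\mathfrak{z}-\omega,\mathfrak{z})$ for $j=0,\dots,5$), $u(0)=v(0)=w(0)=0$, and initial conditions $u(1)=v(1)=1$, $u(\omega)=v(\omega)=e^{i\theta}$, $0<\theta<\pi$; $w$ is defined by $w(\mathfrak{z}_2)-w(\mathfrak{z}_1)=1/((u(\mathfrak{z}_2)-u(\mathfrak{z}_1))(v(\mathfrak{z}_2)-v(\mathfrak{z}_1)))$ on positively oriented edges ($\mathfrak{z}_2-\mathfrak{z}_1\in\{1,\omega,\omega^2\}$). On the positive $k$-axis the constraint reduces to $\alpha u(k)=k\frac{f(k)g(k)f(k-1)}{f(k)g(k)+g(k)f(k-1)+f(k-1)g(k-1)}$, $\beta v(k)=k\frac{g(k)f(k-1)g(k-1)}{f(k)g(k)+g(k)f(k-1)+f(k-1)g(k-1)}$ with $f(k)=u(k+1)-u(k)$, $g(k)=v(k+1)-v(k)$, and analogously on the $\ell$-axis. *)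

(* Defs.v *)
From mathcomp Require Import all_boot all_algebra.
From mathcomp Require Export complex.
From mathcomp Require Export reals trigo.
Import GRing.Theory Num.Theory.
Set Implicit Arguments. Unset Strict Implicit. Unset Printing Implicit Defensive.
Local Open Scope ring_scope.
Local Open Scope complex_scope.

(* A field on the sector {k + l*omega : k, l >= 0} of the triangular lattice is
   a function F : nat -> nat -> R[i], with F k l standing for F(k + l*omega). *)

Definition incK (R : realType) (F : nat -> nat -> R[i]) (k : nat) : R[i] :=
  F k.+1 0%N - F k 0%N.
Definition incL (R : realType) (F : nat -> nat -> R[i]) (l : nat) : R[i] :=
  F 0%N l.+1 - F 0%N l.

(* the denominator f(k)g(k) + g(k)f(k-1) + f(k-1)g(k-1) of the reduced constraint,
   written at index n = k-1, i.e. for the vertex k = n+1 *)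
Definition denom (R : realType) (f g : nat -> R[i]) (n : nat) : R[i] :=
  f n.+1 * g n.+1 + g n.+1 * f n + f n * g n.

(* The fgh-system constraint reduced to an axis (vertex k = n+1 >= 1):
   alpha u(k) = k f(k) g(k) f(k-1) / D,  beta v(k) = k g(k) f(k-1) g(k-1) / D,
   where f, g are the increments of u, v along the axis and U, V the values of
   u, v on the axis. *)
Definition axis_constraint (R : realType) (alpha beta : R[i])
    (U V f g : nat -> R[i]) : Prop :=
  forall n : nat,
    alpha * U n.+1 = (n.+1)%:R * (f n.+1 * g n.+1 * f n) / denom f g n /\
    beta * V n.+1 = (n.+1)%:R * (g n.+1 * f n * g n) / denom f g n.

Definition expi (R : realType) (theta : R) : R[i] := (cos theta) +i* (sin theta).

(* Main.v *)
Require Import Defs.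
From mathcomp Require Import all_boot all_algebra.
From mathcomp Require Import complex reals trigo.
From mathcomp Require Import ring lra zify.
Import GRing.Theory Num.Theory.
Local Open Scope ring_scope.
Lemma core (C : fieldType) (k c d p q x y : C) :
  p != 0 -> q != 0 -> x != 0 -> y != 0 -> k != 0 -> x*y + y*p + p*q != 0 ->
  c * p = k * (x*y*p) / (x*y+y*p+p*q) -> d * q = k*(y*p*q)/(x*y+y*p+p*q) ->
  [/\ c * (x*y+y*p+p*q) = k*x*y, d*(x*y+y*p+p*q) = k*y*p & c*p = d*x].
Proof.
move=> p0 q0 x0 y0 k0 D0 HA HB.
have e1 : c * (x*y+y*p+p*q) = k*x*y.
  apply: (mulIf p0); rewrite mulrAC HA; field; exact: D0.
have e2 : d * (x*y+y*p+p*q) = k*y*p.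
  apply: (mulIf q0); rewrite mulrAC HB; field; exact: D0.
split => //; apply: (mulIf D0); apply: (mulIf y0).
set D := x*y+y*p+p*q in e1 e2 *.
rewrite (_ : c*p*D*y = (c*D)*(p*y)); last by ring.
rewrite (_ : d*x*D*y = (d*D)*(x*y)); last by ring.
rewrite e1 e2; ring.
Qed.

Lemma cancel0 (C : fieldType) (d p q : C) : d != 0 -> d * (p - q) = 0 -> p = q.
Proof. by move=> dn /eqP; rewrite mulf_eq0 (negbTE dn) subr_eq0 => /eqP. Qed.

Lemma axis (R : realType) (a : R[i]) (U V f g : nat -> R[i]) :
  U 0%N = 0 -> V 0%N = 0 -> (forall n, f n = U n.+1 - U n) ->
  (forall n, g n = V n.+1 - V n) ->
  (forall n, f n != 0) -> (forall n, g n != 0) -> (forall n, denom f g n != 0) ->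
  axis_constraint a a U V f g ->
  forall m, [/\ f (3 * m)%N.+1 = f (3 * m)%N, g (3 * m)%N.+2 = g (3 * m)%N.+1 &
     f (3 * m)%N.+3 * g (3 * m)%N.+3 = f (3 * m)%N.+2 * g (3 * m)%N.+2].
Proof.
move=> U0 V0 hf hg fn gn Dn hC.
have st : forall n c d, a * U n.+1 = c * f n -> a * V n.+1 = d * g n ->
   [/\ c * denom f g n = n.+1%:R * f n.+1 * g n.+1,
       d * denom f g n = n.+1%:R * g n.+1 * f n,
       c * f n = d * f n.+1, c != 0 & d != 0].
  move=> n c d hA hB; have [h1 h2] := hC n.
  have [e1 e2 e3] : [/\ c * denom f g n = n.+1%:R * f n.+1 * g n.+1,
       d * denom f g n = n.+1%:R * g n.+1 * f n & c * f n = d * f n.+1].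
    apply: core => //; rewrite ?pnatr_eq0 //; first exact: Dn n; first exact: (etrans (esym hA) h1).
    exact: (etrans (esym hB) h2).
  split => //.
    apply/negP => /eqP c0; move: e1; rewrite c0 mul0r => /eqP.
    by rewrite eq_sym !mulf_eq0 pnatr_eq0 /= (negbTE (fn _)) (negbTE (gn _)).
  apply/negP => /eqP c0; move: e2; rewrite c0 mul0r => /eqP.
  by rewrite eq_sym !mulf_eq0 pnatr_eq0 /= (negbTE (fn _)) (negbTE (gn _)).
have nU : forall n, a * U n.+2 = a * U n.+1 + a * f n.+1.
  by move=> n; rewrite hf; ring.
have nV : forall n, a * V n.+2 = a * V n.+1 + a * g n.+1.
  by move=> n; rewrite hg; ring.
have inv : forall m, a * U (3 * m)%N.+1 = (m%:R + a) * f (3 * m)%N ->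
    a * V (3 * m)%N.+1 = (m%:R + a) * g (3 * m)%N ->
    [/\ f (3 * m)%N.+1 = f (3 * m)%N, g (3 * m)%N.+2 = g (3 * m)%N.+1,
     f (3 * m)%N.+3 * g (3 * m)%N.+3 = f (3 * m)%N.+2 * g (3 * m)%N.+2,
     a * U (3 * m.+1)%N.+1 = (m.+1%:R + a) * f (3 * m.+1)%N &
     a * V (3 * m.+1)%N.+1 = (m.+1%:R + a) * g (3 * m.+1)%N].
  move=> m hA hB.
  have [e1 e2 e3 cn _] := st _ _ _ hA hB.
  have x1 : f (3 * m)%N.+1 = f (3 * m)%N.
    by apply: (@cancel0 R[i] _ _ _ cn); rewrite mulrBr -e3 subrr.
  set k1 := ((3 * m)%N.+1)%:R : R[i].
  have hk1 : k1 = 3 * m%:R + 1 by rewrite /k1 -!natr1 natrM; ring.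
  have y1 : (k1 - 2 * (m%:R + a)) * g (3 * m)%N.+1 = (m%:R + a) * g (3 * m)%N.
    apply: (mulIf (fn (3 * m)%N)).
    move: e2; rewrite /denom x1 => e2.
    rewrite (_ : (k1 - 2 * (m%:R + a)) * g (3 * m)%N.+1 * f (3 * m)%N =
       k1 * g (3 * m)%N.+1 * f (3 * m)%N - 2 * ((m%:R + a) * g (3 * m)%N.+1 * f (3 * m)%N)); last by ring.
    rewrite -e2; ring.
  have hA1 : a * U (3 * m)%N.+2 = (m%:R + 2 * a) * f (3 * m)%N.+1.
    by rewrite nU hA x1; ring.
  have hB1 : a * V (3 * m)%N.+2 = (m%:R + 1 - a) * g (3 * m)%N.+1.
    rewrite nV hB -y1 hk1; ring.
  have [e1' e2' e3' _ dn'] := st _ _ _ hA1 hB1.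
  set k2 := ((3 * m)%N.+2)%:R : R[i].
  have hk2 : k2 = 3 * m%:R + 2 by rewrite /k2 -!natr1 natrM; ring.
  have y2 : g (3 * m)%N.+2 = g (3 * m)%N.+1.
    apply: (@cancel0 R[i] _ _ _ (mulf_neq0 dn' (fn (3 * m)%N.+1))).
    set c := m%:R + 2 * a; set d := m%:R + 1 - a.
    set p := f (3 * m)%N.+1; set q := g (3 * m)%N.+1; set x := f (3 * m)%N.+2; set y := g (3 * m)%N.+2.
    have E : c + 2 * d - k2 = 0 by rewrite hk2 /c /d; ring.
    move: e2' e3'; rewrite /denom -/p -/q -/x -/y -/k2 => e2' e3'.
    rewrite (_ : d * p * (y - q) = - ((d * (x*y + y*p + p*q) - k2 * y * p)
        - y * (d*x - c*p) - p*y*(c + 2*d - k2))); last by ring.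
    by rewrite e2' e3' E /d; ring.
  have hA2 : a * U (3 * m)%N.+3 = (m%:R + 1) * f (3 * m)%N.+2.
    by rewrite nU hA1 e3'; ring.
  have hB2 : a * V (3 * m)%N.+3 = (m%:R + 1) * g (3 * m)%N.+2.
    by rewrite nV hB1 y2; ring.
  have [e1'' e2'' e3'' cn'' dn''] := st _ _ _ hA2 hB2.
  have x3 : f (3 * m)%N.+3 = f (3 * m)%N.+2.
    by apply: (@cancel0 R[i] _ _ _ cn''); rewrite mulrBr -e3'' subrr.
  set k3 := ((3 * m)%N.+3)%:R : R[i].
  have hk3 : k3 = 3 * m%:R + 3 by rewrite /k3 -!natr1 natrM; ring.
  have y3 : g (3 * m)%N.+3 = g (3 * m)%N.+2.
    apply: (@cancel0 R[i] _ _ _ (mulf_neq0 dn'' (fn (3 * m)%N.+2))).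
    move: e2''; rewrite /denom x3 -/k3 hk3 => e2''.
    rewrite (_ : (m%:R + 1) * f (3 * m)%N.+2 * (g (3 * m)%N.+3 - g (3 * m)%N.+2) =
      - ((m%:R + 1) * (f (3 * m)%N.+2 * g (3 * m)%N.+3 + g (3 * m)%N.+3 * f (3 * m)%N.+2 +
        f (3 * m)%N.+2 * g (3 * m)%N.+2) - (3 * m%:R + 3) * g (3 * m)%N.+3 * f (3 * m)%N.+2)); last by ring.
    by rewrite e2''; ring.
  have e3m : (3 * m.+1 = (3 * m)%N.+3)%N by lia.
  have fe : f (3 * m.+1)%N = f (3 * m)%N.+2 by rewrite e3m x3.
  have ge : g (3 * m.+1)%N = g (3 * m)%N.+2 by rewrite e3m y3.
  split => //; first by rewrite x3 y3.
    by rewrite e3m nU hA2 x3 -natr1; ring.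
  by rewrite e3m nV hB2 y3 -natr1; ring.
have all : forall m, a * U (3 * m)%N.+1 = (m%:R + a) * f (3 * m)%N /\
    a * V (3 * m)%N.+1 = (m%:R + a) * g (3 * m)%N.
  elim => [|m [IH1 IH2]].
    by rewrite muln0 hf hg U0 V0 !subr0 add0r.
  by have [] := inv m IH1 IH2.
by move=> m; have [h1 h2] := all m; have [] := inv m h1 h2.
Qed.
Theorem lemma21 (R : realType) (alpha beta : R[i]) (theta : R)
  (u v w : nat -> nat -> R[i]) :
  0 < theta -> theta < pi ->
  (* normalisation and initial conditions *)
  u 0%N 0%N = 0 -> v 0%N 0%N = 0 -> w 0%N 0%N = 0 ->
  u 1%N 0%N = 1 -> v 1%N 0%N = 1 ->
  u 0%N 1%N = expi theta -> v 0%N 1%N = expi theta ->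
  (* the fields are well defined: nonzero edge increments and denominators *)
  (forall n, incK u n != 0) -> (forall n, incK v n != 0) ->
  (forall n, incL u n != 0) -> (forall n, incL v n != 0) ->
  (forall n, denom (incK u) (incK v) n != 0) ->
  (forall n, denom (incL u) (incL v) n != 0) ->
  (* the fgh-system constraint at the vertices of the two axes *)
  axis_constraint alpha beta (fun k => u k 0%N) (fun k => v k 0%N)
    (incK u) (incK v) ->
  axis_constraint alpha beta (fun l => u 0%N l) (fun l => v 0%N l)
    (incL u) (incL v) ->
  (* definition of w on the (positively oriented) axis edges *)
  (forall n, incK w n = (incK u n * incK v n)^-1) ->
  (forall n, incL w n = (incL u n * incL v n)^-1) ->
  beta = alpha ->
  forall k l : nat, (1 <= k)%N -> (1 <= l)%N ->
  `|u (3 * k - 1)%N 0%N - u (3 * k - 2)%N 0%N|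
        = `|u (3 * k - 2)%N 0%N - u (3 * k - 3)%N 0%N| /\
      `|v (3 * k)%N 0%N - v (3 * k - 1)%N 0%N|
        = `|v (3 * k - 1)%N 0%N - v (3 * k - 2)%N 0%N| /\
      `|w (3 * k + 1)%N 0%N - w (3 * k)%N 0%N|
        = `|w (3 * k)%N 0%N - w (3 * k - 1)%N 0%N| /\
      `|u 0%N (3 * l - 1)%N - u 0%N (3 * l - 2)%N|
        = `|u 0%N (3 * l - 2)%N - u 0%N (3 * l - 3)%N| /\
      `|v 0%N (3 * l)%N - v 0%N (3 * l - 1)%N|
        = `|v 0%N (3 * l - 1)%N - v 0%N (3 * l - 2)%N| /\
      `|w 0%N (3 * l + 1)%N - w 0%N (3 * l)%N|
        = `|w 0%N (3 * l)%N - w 0%N (3 * l - 1)%N|.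
Proof.
move=> _ _ u0 v0 _ _ _ _ _ fK gK fL gL DK DL hK hL wK wL eb k l k1 l1; subst beta.
have [aK1 aK2 aK3] := @axis R alpha (fun k => u k 0%N) (fun k => v k 0%N) (incK u) (incK v) u0 v0 (fun n => erefl) (fun n => erefl) fK gK DK hK (k.-1).
have [aL1 aL2 aL3] := @axis R alpha (fun k => u 0%N k) (fun k => v 0%N k) (incL u) (incL v) u0 v0 (fun n => erefl) (fun n => erefl) fL gL DL hL (l.-1).
case: k k1 aK1 aK2 aK3 => [//|m] _ /= aK1 aK2 aK3.
case: l l1 aL1 aL2 aL3 => [//|n] _ /= aL1 aL2 aL3.
have e1 : (3 * m.+1 - 1 = (3 * m).+2)%N by lia.
have e2 : (3 * m.+1 - 2 = (3 * m).+1)%N by lia.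
have e3 : (3 * m.+1 - 3 = (3 * m))%N by lia.
have e4 : (3 * m.+1 + 1 = (3 * m).+4)%N by lia.
have e5 : (3 * m.+1 = (3 * m).+3)%N by lia.
have f1 : (3 * n.+1 - 1 = (3 * n).+2)%N by lia.
have f2 : (3 * n.+1 - 2 = (3 * n).+1)%N by lia.
have f3 : (3 * n.+1 - 3 = (3 * n))%N by lia.
have f4 : (3 * n.+1 + 1 = (3 * n).+4)%N by lia.
have f5 : (3 * n.+1 = (3 * n).+3)%N by lia.
rewrite e1 e2 e3 e4 e5 f1 f2 f3 f4 f5.
split; first by congr (Num.norm _); exact: aK1.
split; first by congr (Num.norm _); exact: aK2.
split; first by congr (Num.norm _);
  exact: (etrans (wK _) (etrans (congr1 GRing.inv aK3) (esym (wK _)))).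
split; first by congr (Num.norm _); exact: aL1.
split; first by congr (Num.norm _); exact: aL2.
by congr (Num.norm _);
  exact: (etrans (wL _) (etrans (congr1 GRing.inv aL3) (esym (wL _)))).
Qed.
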